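(* Let $(\mathcal{A}_\Lambda,\partial_\Lambda)$ and $(\mathcal{A}'_\Lambda,\partial'_\Lambda)$ be filtered Chekanov–Eliashberg DGAs generated by $q_1,\dots,q_n$ and $q_1',\dots,q_n'$ with height filtrations $h,h'$. Let $\bar\phi:(\mathcal{A}_\Lambda,\partial_\Lambda)\to(\mathcal{A}_\Lambda,\partial_\Lambda)$ be a composition of semimonotonic elementary automorphisms, and let $\sigma:\mathcal{A}_\Lambda\to\mathcal{A}'_\Lambda$, $\sigma(q_i)=q_i'$, be a DGA isomorphism such that $\delta\ge\max_i|h'(\sigma(q_i))-h(q_i)|$. Let $\epsilon$ be an augmentation of $\mathcal{A}_\Lambda$ and $\epsilon'=\epsilon\circ\phi^{-1}$. Then $\phi=\sigma\circ\bar\phi$ induces a $2\delta$-interleaving \[ (\phi_1^{\epsilon,\bullet})_\ast: F^\bullet\mathrm{LCH}^\epsilon_\ast(\Lambda)\to F^{\bullet+\delta}\mathrm{LCH}^{\epsilon'}_\ast(\Lambda'). \]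
   Context: A filtered Chekanov–Eliashberg DGA is a Chekanov–Eliashberg DGA (free noncommutative graded algebra over $\mathbb{Z}_2$ on generators, with differential) together with heights $h(q_i)>0$, extended by $h(\text{word})=$ sum of letter heights and $h(\text{sum})=$ max, such that the differential strictly decreases height. An augmentation is an algebra map to $\mathbb{Z}_2$ vanishing in nonzero degrees and killing the image of the differential; $\partial_1^\epsilon$ is the linearized differential on the vector space spanned by the generators. $F^\bullet\mathrm{LCH}^\epsilon_\ast(\Lambda)$ is the persistence module $t\mapsto H_\ast(A^t,\partial_1^\epsilon)$, where $A^t$ is spanned by generators of height $\le t$, with transfer maps induced by inclusion. An elementary automorphism is a chain map $q_j\mapsto q_j+u$, $q_i\mapsto q_i$ ($i\ne j$), $u$ not involving $q_j$; it is semimonotonic if $u$ is a (sum of) word(s) in generators of height strictly less than $h(q_j)$. A $2\delta$-interleaving of persistence modules $U^\bullet,V^\bullet$ consists of maps $\varphi^t:U^t\to V^{t+\delta}$, $\psi^t:V^t\to U^{t+\delta}$ commuting with transfer maps, with $\psi^{t+\delta}\varphi^t$ and $\varphi^{t+\delta}\psi^t$ equal to the transfer maps from $t$ to $t+2\delta$. *)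

(* Defs.v *)
From HB Require Import structures.
From mathcomp Require Import all_boot all_order all_algebra.
Set Implicit Arguments. Unset Strict Implicit. Unset Printing Implicit Defensive.
Import Order.TTheory GRing.Theory Num.Theory.
Local Open Scope ring_scope.

(* The free noncommutative (unital) algebra over Z_2 on generators q_0..q_{n-1}.
   A word is a [seq 'I_n]; an algebra element is a formal sum of words,
   represented by a list of words, two lists representing the same element
   iff every word occurs with the same parity ([aeq]).                      *)
Definition word n := seq 'I_n.
Definition alg n := seq (word n).

Definition supp n (a : alg n) (w : word n) : bool := odd (count_mem w a).
Definition aeq n (a b : alg n) : Prop := forall w, supp a w = supp b w.

Definition gen n (i : 'I_n) : alg n := [:: [:: i]].
Definition add n (a b : alg n) : alg n := a ++ b.
Definition mul n (a b : alg n) : alg n := [seq u ++ v | u <- a, v <- b].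

Fixpoint wimg n m (g : 'I_n -> alg m) (w : word n) : alg m :=
  if w is x :: w' then mul (g x) (wimg g w') else [:: [::]].
Definition ext n m (g : 'I_n -> alg m) (a : alg n) : alg m :=
  flatten [seq wimg g w | w <- a].

(* the derivation (over Z_2, Leibniz rule without signs) determined by d *)
Fixpoint dword n (d : 'I_n -> alg n) (w : word n) : alg n :=
  if w is x :: w' then add (mul (d x) [:: w']) (mul [:: [:: x]] (dword d w'))
  else [::].
Definition dif n (d : 'I_n -> alg n) (a : alg n) : alg n :=
  flatten [seq dword d w | w <- a].

Definition wdeg n (deg : 'I_n -> int) (w : word n) : int := \sum_(x <- w) deg x.
Definition wht (R : realFieldType) n (h : 'I_n -> R) (w : word n) : R :=
  \sum_(x <- w) h x.

Definition is_dga n (deg : 'I_n -> int) (d : 'I_n -> alg n) : Prop :=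
  (forall i w, supp (d i) w -> wdeg deg w = deg i - 1) /\
  (forall i, aeq (dif d (d i)) [::]).

(* filtered DGA: heights positive, differential strictly decreases height
   (height of a sum = max of heights of its words, so: every word occurring
   in d q_i has height < h q_i). *)
Definition is_filtered_dga (R : realFieldType) n (deg : 'I_n -> int)
    (d : 'I_n -> alg n) (h : 'I_n -> R) : Prop :=
  is_dga deg d /\ (forall i, 0 < h i) /\
  (forall i w, supp (d i) w -> wht h w < h i).

Definition is_dga_hom n m (deg : 'I_n -> int) (d : 'I_n -> alg n)
    (deg' : 'I_m -> int) (d' : 'I_m -> alg m) (g : 'I_n -> alg m) : Prop :=
  (forall i w, supp (g i) w -> wdeg deg' w = deg i) /\
  (forall i, aeq (dif d' (g i)) (ext g (d i))).

Definition elem_gen n (j : 'I_n) (u : alg n) : 'I_n -> alg n :=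
  fun i => if i == j then add (gen i) u else gen i.

Definition is_elementary n (deg : 'I_n -> int) (d : 'I_n -> alg n)
    (j : 'I_n) (u : alg n) : Prop :=
  (forall w, supp u w -> j \notin w) /\ is_dga_hom deg d deg d (elem_gen j u).

Definition is_semimonotonic (R : realFieldType) n (h : 'I_n -> R)
    (j : 'I_n) (u : alg n) : Prop :=
  forall w, supp u w -> forall x, x \in w -> h x < h j.

(* generator images of the composition e_1 o e_2 o ... o e_k of a list of
   elementary maps *)
Definition comp_gen n (l : seq ('I_n * alg n)) : 'I_n -> alg n :=
  fun i => foldr (fun e acc => ext (elem_gen e.1 e.2) acc) (gen i) l.

Definition aug n (e : 'I_n -> 'F_2) (a : alg n) : 'F_2 :=
  \sum_(w <- a) \prod_(x <- w) e x.
Definition is_aug n (deg : 'I_n -> int) (d : 'I_n -> alg n)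
    (e : 'I_n -> 'F_2) : Prop :=
  (forall i, deg i != 0 -> e i = 0) /\ (forall i, aug e (d i) = 0).

(* coefficient of the generator j in the linear part of the word w after the
   substitution q_x |-> q_x + e(q_x) *)
Fixpoint linw n (e : 'I_n -> 'F_2) (w : word n) (j : 'I_n) : 'F_2 :=
  if w is x :: w' then
    (x == j)%:R * \prod_(y <- w') e y + e x * linw e w' j
  else 0.

(* linearization (w.r.t. the augmentation e of the target) of the algebra map
   with generator images g, as a matrix acting on row vectors:
   row i = linear part of g(q_i).  With g = d and e = epsilon this is the
   linearized differential d_1^epsilon; with g = phi and e = epsilon' it is
   phi_1^epsilon. *)
Definition linmx n m (e : 'I_m -> 'F_2) (g : 'I_n -> alg m) : 'M['F_2]_(n, m) :=
  \matrix_(i, j) \sum_(w <- g i) linw e w j.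

(* A^t = span of generators of height <= t, vectors are row vectors *)
Definition infilt (R : realFieldType) n (h : 'I_n -> R) (t : R)
    (v : 'rV['F_2]_n) : Prop := forall i, v 0 i != 0 -> h i <= t.
Definition cycle (R : realFieldType) n (D : 'M['F_2]_n) (h : 'I_n -> R) t
    (z : 'rV['F_2]_n) : Prop := infilt h t z /\ z *m D = 0.
Definition bnd (R : realFieldType) n (D : 'M['F_2]_n) (h : 'I_n -> R) t
    (b : 'rV['F_2]_n) : Prop := exists v, infilt h t v /\ b = v *m D.
Definition homologous (R : realFieldType) n (D : 'M['F_2]_n) (h : 'I_n -> R) t
    (z z' : 'rV['F_2]_n) : Prop := bnd D h t (z - z').

Definition induces (R : realFieldType) n m (D : 'M['F_2]_n) (h : 'I_n -> R)
    (D' : 'M['F_2]_m) (h' : 'I_m -> R) (s s' : R) (M : 'M['F_2]_(n, m)) : Prop :=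
  (forall z, cycle D h s z -> cycle D' h' s' (z *m M)) /\
  (forall b, bnd D h s b -> bnd D' h' s' (b *m M)).

(* The maps M_* : F^t H(D) -> F^{t+delta} H(D') and N_* : F^t H(D') ->
   F^{t+delta} H(D) form a 2 delta-interleaving of the persistence modules
   t |-> H_*(A^t) (transfer maps induced by inclusion). *)
Definition interleaving (R : realFieldType) n m (D : 'M['F_2]_n) (h : 'I_n -> R)
    (D' : 'M['F_2]_m) (h' : 'I_m -> R) (delta : R)
    (M : 'M['F_2]_(n, m)) (N : 'M['F_2]_(m, n)) : Prop :=
  (forall t, induces D h D' h' t (t + delta) M) /\
  (forall t, induces D' h' D h t (t + delta) N) /\
  (* commutation with transfer maps *)
  (forall s t, s <= t -> forall z, cycle D h s z ->
     homologous D' h' (t + delta) (z *m M) (z *m M)) /\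
  (forall s t, s <= t -> forall z, cycle D' h' s z ->
     homologous D h (t + delta) (z *m N) (z *m N)) /\
  (* compositions are the transfer maps t -> t + 2 delta *)
  (forall t z, cycle D h t z -> homologous D h (t + 2 * delta) (z *m M *m N) z) /\
  (forall t z, cycle D' h' t z -> homologous D' h' (t + 2 * delta) (z *m N *m M) z).

(* Main.v *)
Require Import Defs.
From HB Require Import structures.
From mathcomp Require Import all_boot all_order all_algebra.
From mathcomp Require Import lra.
Import Order.TTheory GRing.Theory Num.Theory.
Local Open Scope ring_scope.
Set Implicit Arguments. Unset Strict Implicit. Unset Printing Implicit Defensive.

Lemma F2_two : (2%:R : 'F_2) = 0.
Proof. exact: val_inj. Qed.
Lemma F2_char (y : 'F_2) : y + y = 0.
Proof. by rewrite -mulr2n -mulr_natr F2_two mulr0. Qed.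

Section Generic.
Variable n : nat.

Lemma sum_flat (V : nmodType) (T : Type) (G : T -> alg n) (a : seq T) (F : word n -> V) :
  \sum_(w <- flatten [seq G u | u <- a]) F w = \sum_(u <- a) \sum_(w <- G u) F w.
Proof. by rewrite big_flatten big_map. Qed.

Lemma sum_mul (V : nmodType) (a b : alg n) (F : word n -> V) :
  \sum_(w <- Defs.mul a b) F w = \sum_(u <- a) \sum_(v <- b) F (u ++ v).
Proof.
elim: a => [|u a IH]; first by rewrite /Defs.mul /= !big_nil.
by rewrite /Defs.mul /= big_cat big_cons -IH big_map.
Qed.

Lemma sum_cat (V : nmodType) (a b : alg n) (F : word n -> V) :
  \sum_(w <- Defs.add a b) F w = \sum_(w <- a) F w + \sum_(w <- b) F w.
Proof. by rewrite /Defs.add big_cat. Qed.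

Lemma dif_cat d (a b : alg n) : dif d (a ++ b) = dif d a ++ dif d b.
Proof. by rewrite /dif map_cat flatten_cat. Qed.
Lemma ext_cat m (g : 'I_n -> alg m) (a b : alg n) : ext g (a ++ b) = ext g a ++ ext g b.
Proof. by rewrite /ext map_cat flatten_cat. Qed.

Lemma sum_supp (V : zmodType) (F : word n -> V) (a : alg n) :
  (forall x : V, x + x = 0) ->
  \sum_(w <- a) F w = \sum_(w <- filter (supp a) (undup a)) F w.
Proof.
move=> c2.
rewrite -big_undup_iterop_count big_filter [RHS]big_mkcond /=.
apply: eq_bigr => w _.
rewrite /supp.
have E : forall k, iterop k +%R (F w) 0 = F w *+ k.
  by case=> [|k] //=; rewrite iteropS; elim: k => [|k IHk] //=; rewrite ?mulr1n // IHk mulrS addrC.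
rewrite E; move: (count_mem w a) => k.
rewrite -{1}(odd_double_half k) mulrnDr -mul2n mulrnA mulr2n c2 mul0rn addr0.
by case: (odd k); rewrite ?mulr1n ?mulr0n.
Qed.

Lemma sum_aeq (V : zmodType) (F : word n -> V) (a b : alg n) :
  (forall x : V, x + x = 0) -> aeq a b ->
  \sum_(w <- a) F w = \sum_(w <- b) F w.
Proof.
move=> c2 ab; rewrite (sum_supp F a c2) (sum_supp F b c2).
apply: perm_big; apply: uniq_perm; rewrite ?filter_uniq ?undup_uniq //.
move=> w; rewrite !mem_filter !mem_undup -ab.
rewrite /supp; case: (boolP (odd _)) => //= Hodd.
have Hb : odd (count_mem w b) by rewrite -/(supp b w) -ab.
rewrite -!has_pred1 !has_count.
by apply/idP/idP => _; [move: Hb|move: Hodd]; case: (count _ _).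
Qed.

End Generic.

Definition ev (n : nat) (S : pzRingType) (f : 'I_n -> S) (a : alg n) : S :=
  \sum_(w <- a) \prod_(x <- w) f x.

Section Ev.
Variable n : nat.
Variable S : pzRingType.
Implicit Types (f : 'I_n -> S) (a b : alg n) (d : 'I_n -> alg n).


Lemma ev_cat f a b : ev f (a ++ b) = ev f a + ev f b.
Proof. by rewrite /ev big_cat. Qed.
Lemma ev_add f a b : ev f (Defs.add a b) = ev f a + ev f b.
Proof. by rewrite /ev big_cat. Qed.
Lemma ev_nil f : ev f [::] = 0.
Proof. by rewrite /ev big_nil. Qed.
Lemma ev_cons f w a : ev f (w :: a) = \prod_(x <- w) f x + ev f a.
Proof. by rewrite /ev big_cons. Qed.
Lemma ev_word f w : ev f [:: w] = \prod_(x <- w) f x.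
Proof. by rewrite ev_cons ev_nil addr0. Qed.
Lemma ev_gen f i : ev f (gen i) = f i.
Proof. by rewrite /gen ev_word big_cons big_nil mulr1. Qed.

Lemma ev_mul f a b : ev f (Defs.mul a b) = ev f a * ev f b.
Proof.
rewrite /ev sum_mul mulr_suml; apply: eq_bigr => u _.
rewrite mulr_sumr; apply: eq_bigr => v _; by rewrite big_cat.
Qed.

Lemma ev_wimg m (g : 'I_m -> alg n) f w :
  ev f (wimg g w) = \prod_(x <- w) ev f (g x).
Proof.
elim: w => [|x w IH] /=; first by rewrite ev_word !big_nil.
by rewrite ev_mul IH big_cons.
Qed.

Lemma ev_ext m (g : 'I_m -> alg n) f (a : alg m) :
  ev f (ext g a) = ev (fun x => ev f (g x)) a.
Proof.
rewrite /ext /ev sum_flat; apply: eq_bigr => w _.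
by rewrite -ev_wimg.
Qed.

Lemma ev_dif f d a : ev f (dif d a) = \sum_(w <- a) ev f (dword d w).
Proof. by rewrite /dif /ev sum_flat. Qed.

Lemma ev_dword_cat f d u v :
  ev f (dword d (u ++ v)) =
  ev f (dword d u) * \prod_(x <- v) f x + \prod_(x <- u) f x * ev f (dword d v).
Proof.
elim: u => [|x u IH] /=; first by rewrite ev_nil mul0r add0r big_nil mul1r.
rewrite ev_add [in RHS]ev_add !ev_mul !ev_word IH big_cons big_cat /=.
rewrite big_nil !mulr1 big_cons.
by rewrite mulrDr mulrDl !mulrA addrA.
Qed.

Lemma ev_dif_mul f d a b :
  ev f (dif d (Defs.mul a b)) = ev f (dif d a) * ev f b + ev f a * ev f (dif d b).
Proof.
rewrite !ev_dif sum_mul {2 4}/ev mulr_suml mulr_suml -big_split /=.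
apply: eq_bigr => u _.
rewrite mulr_sumr mulr_sumr -big_split /=; apply: eq_bigr => v _.
by rewrite ev_dword_cat.
Qed.

Lemma ev_dif0 f d : (forall y, ev f (d y) = 0) -> forall a, ev f (dif d a) = 0.
Proof.
move=> H a; rewrite ev_dif big1 // => w _.
elim: w => [|x w IH] /=; first by rewrite ev_nil.
by rewrite ev_add !ev_mul H IH mul0r mulr0 addr0.
Qed.

Lemma ev_dif_gen f d i : ev f (dif d (gen i)) = ev f (d i).
Proof.
rewrite ev_dif /gen big_cons big_nil addr0 /=.
have -> : Defs.mul [:: [:: i]] [::] = [::] by [].
rewrite ev_add (ev_mul f (d i) [:: [::]]) ev_nil addr0.
by rewrite ev_word big_nil mulr1.
Qed.

End Ev.

Section Ev2.
Variables (n : nat) (S : pzRingType).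
Implicit Types (f : 'I_n -> S) (d : 'I_n -> alg n).
Lemma ev_ext_add m (g : 'I_m -> alg n) f (a b : alg m) :
  ev f (ext g (Defs.add a b)) = ev f (ext g a) + ev f (ext g b).
Proof. by rewrite /Defs.add ext_cat ev_cat. Qed.
Lemma ev_ext_mul m (g : 'I_m -> alg n) f (a b : alg m) :
  ev f (ext g (Defs.mul a b)) = ev f (ext g a) * ev f (ext g b).
Proof. by rewrite !ev_ext ev_mul. Qed.

Definition Cd m (dS : 'I_m -> alg m) d (g : 'I_m -> alg n) f :=
  forall y, ev f (dif d (g y)) = ev f (ext g (dS y)).

Lemma DE m (dS : 'I_m -> alg m) d (g : 'I_m -> alg n) f :
  Cd dS d g f -> forall b : alg m, ev f (dif d (ext g b)) = ev f (ext g (dif dS b)).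
Proof.
move=> C; elim=> [|w b IH]; first by rewrite /= /dif /ext /= !ev_nil.
rewrite /= -/(ext g b) -/(dif dS b).
have -> : ext g (dword dS w ++ dif dS b) = ext g (dword dS w) ++ ext g (dif dS b).
  exact: ext_cat.
rewrite /ext /= -/(ext g b) dif_cat !ev_cat -/(ext g (dword dS w)) IH; congr (_ + _).
elim: w => [|x w IHw] /=; first by rewrite /dif /ext /= ev_nil.
rewrite ev_dif_mul IHw ev_ext_add !ev_ext_mul C; congr (_ + _).
  by rewrite [ev f (ext g [:: w])]ev_ext ev_word ev_wimg.
by rewrite [ev f (ext g [:: [:: x]])]ev_ext ev_word big_cons big_nil mulr1.
Qed.

End Ev2.

Lemma ev_eqf n (S : pzRingType) (f f' : 'I_n -> S) a : f =1 f' -> ev f a = ev f' a.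
Proof.
move=> E; rewrite /ev; apply: eq_bigr => w _; apply: eq_bigr => x _; exact: E.
Qed.

Lemma ext_gen n (a : alg n) : ext (@gen n) a = a.
Proof.
have W : forall w : word n, wimg (@gen n) w = [:: w].
  by elim=> [|x w IH] //=; rewrite IH.
elim: a => [|w a IH] //.
have -> : ext (@gen n) (w :: a) = wimg (@gen n) w ++ ext (@gen n) a by [].
by rewrite W IH.
Qed.

Lemma C_comp n m p (S : pzRingType) (dS : 'I_p -> alg p) (dM : 'I_m -> alg m)
  (d : 'I_n -> alg n) (g1 : 'I_m -> alg n) (g2 : 'I_p -> alg m) (f : 'I_n -> S) :
  Cd dM d g1 f -> Cd dS dM g2 (fun x => ev f (g1 x)) ->
  Cd dS d (fun y => ext g1 (g2 y)) f.
Proof.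
move=> C1 C2 y.
rewrite (DE C1) ev_ext C2 ev_ext [RHS]ev_ext.
by apply: ev_eqf => x; rewrite ev_ext.
Qed.

Lemma C_aeq n m (S : pzRingType) (dS : 'I_m -> alg m) (d : 'I_n -> alg n)
  (g : 'I_m -> alg n) (f : 'I_n -> S) :
  (forall x : S, x + x = 0) ->
  (forall y, aeq (dif d (g y)) (ext g (dS y))) -> Cd dS d g f.
Proof. move=> c2 H y; rewrite /ev; exact: sum_aeq. Qed.

Lemma C_cl n (deg : 'I_n -> int) (d : 'I_n -> alg n) (l : seq ('I_n * alg n)) :
  (forall e, e \in l -> is_elementary deg d e.1 e.2) ->
  forall (S : pzRingType) (f : 'I_n -> S), (forall x : S, x + x = 0) ->
  Cd d d (comp_gen l) f.
Proof.
elim: l => [|a l IH] Hl S f c2.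
  move=> y; rewrite /comp_gen /= ev_dif_gen ext_gen //.
have Ha : is_elementary deg d a.1 a.2 by apply: Hl; rewrite inE eqxx.
have Hl' : forall e, e \in l -> is_elementary deg d e.1 e.2.
  by move=> e He; apply: Hl; rewrite inE He orbT.
apply: (@C_comp n n n S d d d (elem_gen a.1 a.2) (comp_gen l) f).
  by apply: C_aeq => // y; case: Ha => _ [_ H]; exact: H.
exact: IH.
Qed.

Lemma ev_dif_aeq n (S : pzRingType) (f : 'I_n -> S) (d : 'I_n -> alg n) (a b : alg n) :
  (forall x : S, x + x = 0) -> aeq a b -> ev f (dif d a) = ev f (dif d b).
Proof. by move=> c2 ab; rewrite !ev_dif; apply: sum_aeq. Qed.

Lemma ev_aeq n (S : pzRingType) (f : 'I_n -> S) (a b : alg n) :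
  (forall x : S, x + x = 0) -> aeq a b -> ev f a = ev f b.
Proof. by move=> c2 ab; rewrite /ev; apply: sum_aeq. Qed.

Section Qsec.
Variable n : nat.
Local Notation M := 'M['F_2]_(n.+1).

Definition Qm (c : 'F_2) (v : 'I_n -> 'F_2) : M :=
  c%:M + \sum_j v j *: delta_mx 0 (lift 0 j).

Lemma Qm_eq c c' v v' : c = c' -> v =1 v' -> Qm c v = Qm c' v'.
Proof. by move=> -> E; rewrite /Qm; congr (_ + _); apply: eq_bigr => j _; rewrite E. Qed.

Lemma Qm_00 c v : Qm c v 0 0 = c.
Proof.
rewrite /Qm !mxE summxE big1 ?addr0 ?eqxx ?mulr1n // => j _.
by rewrite !mxE eqxx /= mulr0.
Qed.

Lemma Qm_0l c v k : Qm c v 0 (lift 0 k) = v k.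
Proof.
rewrite /Qm !mxE summxE /= mulr0n add0r.
rewrite (bigD1 k) //= big1 ?addr0.
  by rewrite !mxE !eqxx mulr1.
move=> j /negbTE jk; rewrite !mxE eqxx /=.
by rewrite (inj_eq (@lift_inj _ 0)) eq_sym jk mulr0.
Qed.

Lemma Qm_add c v c' v' : Qm c v + Qm c' v' = Qm (c + c') (fun j => v j + v' j).
Proof.
have SD : (c + c')%:M = c%:M + c'%:M :> M by apply/matrixP => i j; rewrite !mxE mulrnDl.
rewrite /Qm SD -!addrA; congr (_ + _).
rewrite addrCA; congr (_ + _).
by rewrite -big_split /=; apply: eq_bigr => j _; rewrite scalerDl.
Qed.

Lemma Qm0 : Qm 0 (fun _ => 0) = 0.
Proof.
rewrite /Qm big1 ?addr0; last by move=> j _; rewrite scale0r.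
by apply/matrixP => i j; rewrite !mxE mul0rn.
Qed.

Lemma Qm1 : Qm 1 (fun _ => 0) = 1.
Proof. by rewrite /Qm big1 ?addr0 // => j _; rewrite scale0r. Qed.

Lemma Qm_sum (I : Type) (s : seq I) (c : I -> 'F_2) (v : I -> 'I_n -> 'F_2) :
  \sum_(i <- s) Qm (c i) (v i) = Qm (\sum_(i <- s) c i) (fun j => \sum_(i <- s) v i j).
Proof.
elim: s => [|i s IH]; first by rewrite !big_nil -Qm0; apply: Qm_eq => // j; rewrite big_nil.
rewrite !big_cons IH Qm_add; apply: Qm_eq => // j; by rewrite big_cons.
Qed.

Lemma Qm_mul c v c' v' :
  Qm c v * Qm c' v' = Qm (c * c') (fun j => c * v' j + c' * v j).
Proof.
rewrite /Qm mulrDl !mulrDr.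
have -> : (\sum_j v j *: delta_mx 0 (lift 0 j) : M) * \sum_j v' j *: delta_mx 0 (lift 0 j) = 0.
  rewrite -[_ * _]/(mulmx _ _) mulmx_suml big1 // => j _.
  rewrite mulmx_sumr big1 // => k _.
  by rewrite -scalemxAl -scalemxAr mul_delta_mx_cond eq_sym (negbTE (neq_lift 0 j)) mulr0n !scaler0.
rewrite addr0 -[c%:M * c'%:M]/(mulmx _ _) -scalar_mxM.
rewrite -[c%:M * _]/(mulmx _ _) -[_ * c'%:M]/(mulmx _ _) mul_scalar_mx mul_mx_scalar.
rewrite -addrA; congr (_ + _).
rewrite !scaler_sumr -big_split /=; apply: eq_bigr => j _.
by rewrite !scalerA scalerDl.
Qed.

End Qsec.

Definition Lin n (e : 'I_n -> 'F_2) (a : alg n) (j : 'I_n) : 'F_2 :=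
  \sum_(w <- a) linw e w j.
Definition Fm n (e : 'I_n -> 'F_2) (x : 'I_n) : 'M['F_2]_(n.+1) :=
  Qm (e x) (fun k => (x == k)%:R).

Lemma aug_ev n (e : 'I_n -> 'F_2) a : aug e a = ev e a.
Proof. by []. Qed.

Lemma sum_delta (V : pzSemiRingType) m (x : 'I_m) (F : 'I_m -> V) :
  \sum_i (x == i)%:R * F i = F x.
Proof.
rewrite (bigD1 x) //= eqxx mul1r big1 ?addr0 // => j /negbTE jx.
by rewrite eq_sym jx mul0r.
Qed.

Lemma prodQ n m (c : 'I_m -> 'F_2) (v : 'I_m -> 'I_n -> 'F_2) (w : word m) :
  \prod_(x <- w) Qm (c x) (v x) =
  Qm (\prod_(x <- w) c x) (fun k => \sum_j linw c w j * v j k).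
Proof.
elim: w => [|x w IH].
  rewrite !big_nil -Qm1; apply: Qm_eq => // k.
  by rewrite big1 // => j _; rewrite mul0r.
rewrite !big_cons IH Qm_mul; apply: Qm_eq => // k.
rewrite /= addrC.
under [RHS]eq_bigr => j _ do rewrite mulrDl.
rewrite big_split /= mulr_sumr; congr (_ + _).
  rewrite -(sum_delta x (fun i => \prod_(y <- w) c y * v i k)).
  by apply: eq_bigr => j _; rewrite mulrA.
by apply: eq_bigr => j _; rewrite mulrA.
Qed.

Lemma KG n m (c : 'I_m -> 'F_2) (v : 'I_m -> 'I_n -> 'F_2) (a : alg m) :
  ev (fun x => Qm (c x) (v x)) a =
  Qm (aug c a) (fun k => \sum_j Lin c a j * v j k).
Proof.
rewrite /ev; under eq_bigr do rewrite prodQ.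
rewrite Qm_sum; apply: Qm_eq => // k.
rewrite exchange_big /=; apply: eq_bigr => j _.
by rewrite /Lin mulr_suml.
Qed.

Lemma prodF n (e : 'I_n -> 'F_2) (w : word n) :
  \prod_(x <- w) Fm e x = Qm (\prod_(x <- w) e x) (linw e w).
Proof.
rewrite /Fm prodQ; apply: Qm_eq => // k.
rewrite (bigD1 k) //= eqxx mulr1 big1 ?addr0 // => j /negbTE jk.
by rewrite jk mulr0.
Qed.

Lemma K n (e : 'I_n -> 'F_2) (a : alg n) : ev (Fm e) a = Qm (aug e a) (Lin e a).
Proof.
rewrite /Fm KG; apply: Qm_eq => // k.
rewrite (bigD1 k) //= eqxx mulr1 big1 ?addr0 // => j /negbTE jk.
by rewrite jk mulr0.
Qed.

Lemma LinE n (e : 'I_n -> 'F_2) (a : alg n) k : Lin e a k = ev (Fm e) a 0 (lift 0 k).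
Proof. by rewrite K Qm_0l. Qed.
Lemma augE n (e : 'I_n -> 'F_2) (a : alg n) : aug e a = ev (Fm e) a 0 0.
Proof. by rewrite K Qm_00. Qed.

Lemma Lin_ext n m (e : 'I_n -> 'F_2) (g : 'I_m -> alg n) (a : alg m) k :
  Lin e (ext g a) k = \sum_j Lin (fun x => aug e (g x)) a j * Lin e (g j) k.
Proof.
rewrite LinE ev_ext (ev_eqf _ (fun x => K e (g x))) KG Qm_0l.
by [].
Qed.

Lemma DER n (e : 'I_n -> 'F_2) (dT : 'I_n -> alg n) (a : alg n) :
  (forall y, aug e (dT y) = 0) ->
  ev (Fm e) (dif dT a) = Qm 0 (fun k => \sum_j Lin e a j * Lin e (dT j) k).
Proof.
move=> Ha.
have W : forall w, ev (Fm e) (dword dT w) =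
    Qm 0 (fun k => \sum_j linw e w j * Lin e (dT j) k).
  elim=> [|x w IH] /=.
    rewrite ev_nil -Qm0; apply: Qm_eq => // k.
    by rewrite big1 // => j _; rewrite mul0r.
  rewrite ev_add !ev_mul IH !ev_word prodF K Ha big_cons big_nil mulr1.
  rewrite /Fm !Qm_mul Qm_add; apply: Qm_eq; first by rewrite !mul0r !mulr0 addr0.
  move=> k; rewrite !mul0r !addr0 add0r.
  under [RHS]eq_bigr => j _ do rewrite mulrDl.
  rewrite big_split /=; congr (_ + _).
    under [RHS]eq_bigr => i _ do rewrite -mulrA.
    by rewrite sum_delta.
  rewrite mulr_sumr; by apply: eq_bigr => j _; rewrite mulrA.
rewrite ev_dif; under eq_bigr do rewrite W.
rewrite Qm_sum; apply: Qm_eq; first by rewrite big1.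
move=> k; rewrite exchange_big /=; apply: eq_bigr => j _.
by rewrite /Lin mulr_suml.
Qed.

Lemma sum_nz (I : eqType) (s : seq I) (F : I -> 'F_2) :
  \sum_(i <- s) F i != 0 -> exists2 i, i \in s & F i != 0.
Proof.
move=> H; apply/hasP; apply/negPn/negP => /hasPn Hn; move: H.
rewrite big1_seq ?eqxx // => i /andP[_ Hi].
by move: (Hn i Hi); rewrite negbK => /eqP.
Qed.

Lemma mul_nz (a b : 'F_2) : a * b != 0 -> a != 0 /\ b != 0.
Proof. by rewrite mulf_eq0 negb_or => /andP. Qed.

Lemma Lin_aeq n (e : 'I_n -> 'F_2) a b k : aeq a b -> Lin e a k = Lin e b k.
Proof. by move=> ab; rewrite /Lin; apply: sum_aeq => //; exact: F2_char. Qed.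

Lemma Lin_gen n (e : 'I_n -> 'F_2) i k : Lin e (gen i) k = (i == k)%:R.
Proof. by rewrite /Lin /gen big_cons big_nil /= big_nil mulr1 mulr0 !addr0. Qed.

Lemma Lin_add n (e : 'I_n -> 'F_2) a b k : Lin e (Defs.add a b) k = Lin e a k + Lin e b k.
Proof. by rewrite /Lin /Defs.add big_cat. Qed.

Lemma linw_notin n (e : 'I_n -> 'F_2) w k : k \notin w -> linw e w k = 0.
Proof.
elim: w => [|x w IH] //=; rewrite inE negb_or => /andP[kx kw].
by rewrite eq_sym (negbTE kx) mul0r add0r IH // mulr0.
Qed.

Lemma Lin_supp n (e : 'I_n -> 'F_2) a k :
  Lin e a k != 0 -> exists2 w, supp a w & k \in w.
Proof.
rewrite /Lin (sum_supp _ _ F2_char) => /sum_nz [w].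
rewrite mem_filter => /andP[sw _] H; exists w => //.
by apply/negPn/negP => /(linw_notin e) E; move: H; rewrite E eqxx.
Qed.

Lemma filt_cl (R : realFieldType) n (h : 'I_n -> R) (l : seq ('I_n * alg n)) :
  (forall e, e \in l -> is_semimonotonic h e.1 e.2) ->
  forall (e : 'I_n -> 'F_2) i k, Lin e (comp_gen l i) k != 0 -> h k <= h i.
Proof.
elim: l => [|a l IH] Hl e i k.
  rewrite /comp_gen /= Lin_gen; case: (eqVneq i k) => [->|ik]; first by rewrite lexx.
  by rewrite eqxx.
have Ha : is_semimonotonic h a.1 a.2 by apply: Hl; rewrite inE eqxx.
have Hl' : forall e, e \in l -> is_semimonotonic h e.1 e.2.
  by move=> e' He; apply: Hl; rewrite inE He orbT.
rewrite [comp_gen _ i]/comp_gen /= -/(comp_gen l i) Lin_ext => /sum_nz [j _] /mul_nz [H1 H2].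
apply: le_trans (IH Hl' _ _ _ H1).
move: H2; rewrite /elem_gen; case: (eqVneq j a.1) => [->|ja].
  rewrite Lin_add Lin_gen.
  case: (eqVneq a.1 k) => [->|ak]; first by rewrite lexx.
  rewrite add0r => /Lin_supp [w sw kw].
  by apply: ltW; apply: (Ha w sw).
rewrite Lin_gen; case: (eqVneq j k) => [->|jk]; first by rewrite lexx.
by rewrite eqxx.
Qed.

Lemma linw_eqf n (e e' : 'I_n -> 'F_2) w k : e =1 e' -> linw e w k = linw e' w k.
Proof.
move=> E; elim: w => [|x w IH] //=; rewrite IH E; congr (_ * _ + _).
by apply: eq_bigr => y _; rewrite E.
Qed.

Lemma Lin_eqf n (e e' : 'I_n -> 'F_2) a k : e =1 e' -> Lin e a k = Lin e' a k.
Proof. by move=> E; apply: eq_bigr => w _; apply: linw_eqf. Qed.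

Lemma inv_filt (R : realFieldType) n (h : 'I_n -> R) (M N : 'M['F_2]_n) :
  M *m N = 1%:M -> (forall i k, M i k != 0 -> h k <= h i) ->
  forall i k, N i k != 0 -> h k <= h i.
Proof.
move=> MN HM.
pose P (X : 'M['F_2]_n) := [forall i, forall k, (X i k != 0) ==> (h k <= h i)].
have PE X : P X = true <-> (forall i k, X i k != 0 -> h k <= h i).
  split=> [/forallP H i k|H]; first by move/forallP: (H i) => /(_ k) /implyP.
  by apply/forallP => i; apply/forallP => k; apply/implyP; exact: H.
have Pmul X : P X -> P (X *m M).
  move/PE=> HX; apply/PE => i k; rewrite mxE => /sum_nz [j _] /mul_nz [H1 H2].
  exact: le_trans (HM _ _ H2) (HX _ _ H1).
pose W := [set X | P X].
pose f := fun X : 'M['F_2]_n => X *m M.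
have finj : injective f.
  by move=> X Y /(congr1 (mulmx^~ N)); rewrite /f -!mulmxA MN !mulmx1.
have sub : f @: W \subset W.
  by apply/subsetP => Y /imsetP [X]; rewrite !inE => PX ->; exact: Pmul.
have eqW : f @: W = W.
  by apply/eqP; rewrite eqEcard sub /= (card_imset _ finj).
have : 1%:M \in f @: W.
  rewrite eqW inE; apply/PE => i k; rewrite mxE.
  by case: (eqVneq i k) => [->|_]; rewrite ?lexx ?mulr0n ?eqxx.
case/imsetP => X; rewrite inE => /PE PX E.
have -> : N = X by rewrite -[N]mul1mx E /f -mulmxA MN mulmx1.
exact: PX.
Qed.

Lemma infilt_mul (R : realFieldType) n (h h' : 'I_n -> R) (X : 'M['F_2]_n) t t' v :
  (forall i k, X i k != 0 -> h i <= t -> h' k <= t') ->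
  infilt h t v -> infilt h' t' (v *m X).
Proof.
move=> HX Hv k; rewrite mxE => /sum_nz [i _] /mul_nz [H1 H2].
exact: HX i k H2 (Hv i H1).
Qed.

Unset Implicit Arguments. Set Strict Implicit.

Theorem proposition4p4 (R : realFieldType) (n : nat)
    (deg : 'I_n -> int) (d : 'I_n -> alg n) (h : 'I_n -> R)
    (deg' : 'I_n -> int) (d' : 'I_n -> alg n) (h' : 'I_n -> R)
    (l : seq ('I_n * alg n)) (psi : 'I_n -> alg n)
    (eps : 'I_n -> 'F_2) (delta : R) :
  is_filtered_dga deg d h ->
  is_filtered_dga deg' d' h' ->
  (* phibar is a composition of semimonotonic elementary automorphisms *)
  (forall e, e \in l -> is_elementary deg d e.1 e.2 /\ is_semimonotonic h e.1 e.2) ->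
  (* sigma : q_i |-> q_i' is a DGA isomorphism *)
  is_dga_hom deg d deg' d' (@gen n) ->
  (forall i, `|h' i - h i| <= delta) ->
  let phi := fun i => ext (@gen n) (comp_gen l i) in
  (* psi = phi^{-1} *)
  (forall i, aeq (ext phi (psi i)) (gen i)) ->
  (forall i, aeq (ext psi (phi i)) (gen i)) ->
  is_aug deg d eps ->
  let eps' := fun i => aug eps (psi i) in
  interleaving (linmx eps d) h (linmx eps' d') h' delta
    (linmx eps' phi) (linmx eps psi).
Proof.
move=> _ _ Hl Hsig Hdelta phi Hpsi1 Hpsi2 [_ Haug] eps'.
have c2M : forall x : 'M['F_2]_(n.+1), x + x = 0.
  by move=> x; apply/matrixP => i j; rewrite !mxE F2_char.
have c2F := F2_char.
have phiE : forall i, phi i = comp_gen l i by move=> i; rewrite /phi ext_gen.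
have Cphi : forall (S : pzRingType) (f : 'I_n -> S), (forall x : S, x + x = 0) ->
    Cd d d' phi f.
  move=> S f c2; apply: (@C_comp n n n S d d d' (@gen n) (comp_gen l) f).
    by apply: C_aeq => // y; case: Hsig => _; exact.
  apply: (C_cl (deg := deg)) => //.
  by move=> e He; case: (Hl e He).
have augphi : forall x, aug eps' (phi x) = eps x.
  move=> x; rewrite aug_ev.
  rewrite (_ : ev eps' (phi x) = ev eps (ext psi (phi x))); last by rewrite ev_ext.
  by rewrite (ev_aeq _ c2F (Hpsi2 x)) ev_gen.
have augd' : forall x, aug eps' (d' x) = 0.
  move=> x; rewrite aug_ev -ev_dif_gen.
  have Hs : aeq (gen x) (ext phi (psi x)) by move=> w; rewrite Hpsi1.
  rewrite (ev_dif_aeq _ _ c2F Hs) (DE (Cphi _ _ c2F)) ev_ext.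
  rewrite (ev_eqf _ (f' := eps)); last by move=> y; rewrite -aug_ev augphi.
  by apply: ev_dif0 => y; rewrite -aug_ev Haug.
set M := linmx eps' phi; set N := linmx eps psi.
set D := linmx eps d; set D' := linmx eps' d'.
have MN : M *m N = 1%:M.
  apply/matrixP => i k; rewrite !mxE.
  rewrite (_ : \sum_j _ = Lin eps (ext psi (phi i)) k).
    by rewrite (Lin_aeq _ _ (Hpsi2 i)) Lin_gen.
  by rewrite (Lin_ext eps psi (phi i) k); apply: eq_bigr => j _; rewrite !mxE.
have NM : N *m M = 1%:M by exact: mulmx1C MN.
have MD : M *m D' = D *m M.
  apply/matrixP => i k; rewrite !mxE.
  rewrite (_ : \sum_j _ = ev (Fm eps') (dif d' (phi i)) 0 (lift 0 k)); last first.
    by rewrite DER // Qm_0l; apply: eq_bigr => j _; rewrite !mxE.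
  rewrite (Cphi _ _ c2M) -LinE Lin_ext; apply: eq_bigr => j _.
  by rewrite !mxE (Lin_eqf _ _ augphi).
have ND : N *m D = D' *m N.
  by rewrite -[N *m D]mulmx1 -MN !mulmxA -[N *m D *m M]mulmxA -MD !mulmxA NM mul1mx.
have Mfilt : forall i k, M i k != 0 -> h k <= h i.
  move=> i k; rewrite mxE phiE; apply: filt_cl.
  by move=> e He; case: (Hl e He).
have Nfilt := inv_filt MN Mfilt.
have HMf : forall t v, infilt h t v -> infilt h' (t + delta) (v *m M).
  move=> t v; apply: infilt_mul => i k /Mfilt hki hit.
  move: (Hdelta k); rewrite ler_norml => /andP[_ H].
  lra.
have HNf : forall t v, infilt h' t v -> infilt h (t + delta) (v *m N).
  move=> t v; apply: infilt_mul => i k /Nfilt hki hit.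
  move: (Hdelta i); rewrite ler_norml => /andP[H _].
  lra.
have hom0 : forall (DD : 'M['F_2]_n) (hh : 'I_n -> R) t (z : 'rV['F_2]_n),
    homologous DD hh t z z.
  move=> DD hh t z; exists 0; split; first by move=> i; rewrite mxE eqxx.
  by rewrite subrr mul0mx.
split; [|split; [|split; [|split; [|split]]]].
- move=> t; split.
    move=> z [Hz Dz]; split; first exact: HMf.
    by rewrite -mulmxA MD mulmxA Dz mul0mx.
  move=> b [v [Hv ->]]; exists (v *m M); split; first exact: HMf.
  by rewrite -!mulmxA MD.
- move=> t; split.
    move=> z [Hz Dz]; split; first exact: HNf.
    by rewrite -mulmxA ND mulmxA Dz mul0mx.
  move=> b [v [Hv ->]]; exists (v *m N); split; first exact: HNf.
  by rewrite -!mulmxA ND.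
- by move=> s t _ z _; apply: hom0.
- by move=> s t _ z _; apply: hom0.
- by move=> t z _; rewrite -mulmxA MN mulmx1; apply: hom0.
- by move=> t z _; rewrite -mulmxA NM mulmx1; apply: hom0.
Qed.
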